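(* Equip $V^{5,2}=\mathrm{SO}(5)/\mathrm{SO}(3)$ with the Sasakian structure $\eta=X^1$, $g=y_1Q|_{\mathfrak m_1}+y_2Q|_{\mathfrak m_2}+y_3Q|_{\mathfrak m_3}$ with $y_1=4y_2^2$, $y_2=y_3>0$. Then the $\mathrm{SO}(5)$-invariant connection on the homogeneous bundle $P_1=\mathrm{SO}(5)\times_{\mathrm{id}}\mathrm{SO}(3)$ corresponding to $\alpha=e^8\otimes e_8+e^9\otimes e_9+e^{10}\otimes e_{10}$ is a self-dual contact instanton, i.e. its curvature satisfies $\ast(F_\alpha\wedge\eta\wedge\omega)=F_\alpha$ with $\omega=\frac12d\eta$.
   Context: Basis of $\mathfrak{so}(5)$ (with $E_{ij}$ the elementary $5\times5$ matrices): $e_1=E_{12}-E_{21}$, $e_2=E_{13}-E_{31}$, $e_3=E_{14}-E_{41}$, $e_4=E_{15}-E_{51}$, $e_5=E_{23}-E_{32}$, $e_6=E_{24}-E_{42}$, $e_7=E_{25}-E_{52}$, $e_8=E_{34}-E_{43}$, $e_9=E_{35}-E_{53}$, $e_{10}=E_{54}-E_{45}$; bracket = commutator; $e^i$ dual basis. $\mathrm{SO}(3)$ has Lie algebra $\mathrm{span}\{e_8,e_9,e_{10}\}$; $\mathfrak m=\mathrm{span}\{e_1,\dots,e_7\}$ identified with the tangent space of $V^{5,2}$ at the origin. $Q(A,B)=\frac12\mathrm{tr}(AB^T)$, $\mathfrak m_1=\mathrm{span}\{e_1\}$, $\mathfrak m_2=\mathrm{span}\{e_2,e_3,e_4\}$,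 $\mathfrak m_3=\mathrm{span}\{e_5,e_6,e_7\}$. Orthonormal basis $X_1=e_1/\sqrt{y_1}$, $X_i=e_i/\sqrt{y_2}$ ($i=2,\dots,7$), dual $X^i$; $\omega=X^{25}+X^{36}+X^{47}$. Invariant connections on $G\times_\phi K\to G/H$ correspond to linear maps $\alpha:\mathfrak g\to\mathfrak k$ with $\alpha|_{\mathfrak h}=\phi_*$ and $\mathrm{Ad}(H)$-equivariance; the curvature on $\mathfrak m$ is $F(X,Y)=[\alpha X,\alpha Y]-\alpha([X,Y])$. $\ast$ is the Hodge star of $g$ with the orientation for which the self-dual contact 2-forms $X^{23}+X^{56}$, $X^{24}+X^{57}$, $X^{34}+X^{67}$, etc. satisfy $\ast(\eta\wedge\omega\wedge w)=w$. *)

(* Defs.v *)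
From HB Require Import structures.
From mathcomp Require Import all_boot all_order all_algebra.
From mathcomp Require Import reals.
Set Implicit Arguments. Unset Strict Implicit. Unset Printing Implicit Defensive.
Import Order.TTheory GRing.Theory Num.Theory.
Local Open Scope ring_scope.

Section V52.
Variable R : realType.

(* index pairs (1-based) of the basis e_k = E_{ab} - E_{ba} of so(5) *)
Definition epair (k : nat) : nat * nat :=
  match k with
  | 1 => (1,2)%N | 2 => (1,3)%N | 3 => (1,4)%N | 4 => (1,5)%N
  | 5 => (2,3)%N | 6 => (2,4)%N | 7 => (2,5)%N | 8 => (3,4)%N
  | 9 => (3,5)%N | 10 => (5,4)%N | _ => (0,0)%N
  end.

Definition Emx (a b : nat) : 'M[R]_5 := delta_mx (inord a.-1) (inord b.-1).

Definition ebasis (k : nat) : 'M[R]_5 :=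
  let: (a, b) := epair k in Emx a b - Emx b a.

(* the dual basis e^k, evaluated on a skew-symmetric matrix *)
Definition ecoef (k : nat) (A : 'M[R]_5) : R :=
  let: (a, b) := epair k in A (inord a.-1) (inord b.-1).

Definition lie (A B : 'M[R]_5) : 'M[R]_5 := A *m B - B *m A.

Variables y1 y2 y3 : R.

(* metric coefficient of the block containing X_{i+1} (0-based index i) *)
Definition yof (i : 'I_7) : R :=
  if (i == 0 :> nat) then y1 else if (i < 4)%N then y2 else y3.

(* orthonormal basis X_1..X_7 (0-based: X i = X_{i+1}) *)
Definition X (i : 'I_7) : 'M[R]_5 := (Num.sqrt (yof i))^-1 *: ebasis i.+1.

(* eta = X^1 as a functional on g (zero on h) *)
Definition etaf (A : 'M[R]_5) : R := Num.sqrt y1 * ecoef 1 A.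

Definition alpha (A : 'M[R]_5) : 'M[R]_5 :=
  ecoef 8 A *: ebasis 8 + ecoef 9 A *: ebasis 9 + ecoef 10 A *: ebasis 10.

Definition curv (A B : 'M[R]_5) : 'M[R]_5 :=
  lie (alpha A) (alpha B) - alpha (lie A B).

(* ---- exterior algebra on m^* in the orthonormal coframe X^1..X^7 ----
   A (V-valued) form is given by its coefficients on X^I, I increasing. *)
Definition form (V : Type) := {set 'I_7} -> V.

(* shuffle sign of X^I /\ X^J *)
Definition shsign (I J : {set 'I_7}) : R :=
  (-1) ^+ #|[set p : 'I_7 * 'I_7 | [&& p.1 \in I, p.2 \in J & (p.2 < p.1)%N]]|.

Definition wedge (V : lmodType R) (a : form V) (b : form R) : form V :=
  fun K => \sum_(I : {set 'I_7} | I \subset K)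
             (shsign I (K :\: I) * b (K :\: I)) *: a I.

(* Hodge star of the orthonormal coframe with volume form eps X^{1...7} *)
Definition hodge (V : lmodType R) (eps : R) (a : form V) : form V :=
  fun J => (eps * shsign (~: J) J) *: a (~: J).

Definition form1 (V : lmodType R) (f : 'I_7 -> V) : form V :=
  fun I => if #|I| == 1%N then \sum_(i in I) f i else 0.
Definition form2 (V : lmodType R) (f : 'I_7 -> 'I_7 -> V) : form V :=
  fun I => if #|I| == 2%N then \sum_(i in I) \sum_(j in I | (i < j)%N) f i j
           else 0.

Definition eta_form : form R := form1 (V := R^o) (fun i => etaf (X i)).

(* omega = 1/2 d eta, with d eta (X,Y) = - eta([X,Y]) for invariant forms *)
Definition omega : form R :=
  form2 (V := R^o) (fun i j => - (1 / 2) * etaf (lie (X i) (X j))).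

Definition Fal : form 'M[R]_5 := form2 (fun i j => curv (X i) (X j)).

End V52.

(* the self-dual contact 2-form X^{23} + X^{56} fixing the orientation *)
Definition w0 (R : realType) : form R := fun I =>
  ((I == [set (inord 1 : 'I_7); inord 2]) || (I == [set (inord 4 : 'I_7); inord 5]))%:R.

(* Main.v *)
Require Import Defs.
From HB Require Import structures.
From mathcomp Require Import all_boot all_order all_algebra.
From mathcomp Require Import reals.
From mathcomp Require Import ring lra.
From Stdlib Require Import FunctionalExtensionality.
Import Order.TTheory GRing.Theory Num.Theory.
Local Open Scope ring_scope.
Set Implicit Arguments. Unset Strict Implicit. Unset Printing Implicit Defensive.


Definition sumN (n : nat) (F : nat -> int) : int := foldr (fun i acc => F i + acc) 0 (iota 0 n).
Definition sumNat (n : nat) (F : nat -> nat) : nat := foldr (fun i acc => F i + acc)%N 0%N (iota 0 n).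
Definition bit (i m : nat) : bool := odd (m %/ 2 ^ i).
Definition cardM m := sumNat 7 (fun i => if bit i m then 1 else 0)%N.
Definition subM m k := all (fun i => bit i m ==> bit i k) (iota 0 7).
Definition dm k m := sumNat 7 (fun i => if bit i k && ~~ bit i m then 2 ^ i else 0)%N.
Definition cm k := dm 127 k.
Definition shcnt a b := sumNat 7 (fun i => sumNat 7 (fun j =>
   if [&& bit i a, bit j b & (j < i)%N] then 1 else 0))%N.
Definition shZ a b : int := (-1) ^+ shcnt a b.

Definition setof (m : nat) : {set 'I_7} := [set i : 'I_7 | bit i m].

Lemma sumNE n (P : pred nat) (F : nat -> int) :
  \sum_(0 <= i < n | P i) F i = sumN n (fun i => if P i then F i else 0).
Proof. by rewrite big_mkcond unlock /sumN /index_iota subn0. Qed.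

Lemma sumNatE n (P : pred nat) (F : nat -> nat) :
  (\sum_(0 <= i < n | P i) F i)%N = sumNat n (fun i => if P i then F i else 0)%N.
Proof. by rewrite big_mkcond unlock /sumNat /index_iota subn0. Qed.

Lemma chk_inj : all (fun m => all (fun m' =>
   (all (fun i => bit i m == bit i m') (iota 0 7)) ==> (m == m')) (iota 0 128)) (iota 0 128).
Proof. by vm_compute. Qed.

Lemma setof_inj m m' : (m < 128)%N -> (m' < 128)%N -> setof m = setof m' -> m = m'.
Proof.
move=> hm hm' E.
have H : forall i, (i < 7)%N -> bit i m = bit i m'.
  by move=> i hi; have := congr1 (fun A : {set 'I_7} => Ordinal hi \in A) E; rewrite !inE.
move/allP: chk_inj => /(_ m); rewrite mem_iota hm => /(_ isT) /allP /(_ m').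
rewrite mem_iota hm' => /(_ isT) /implyP imp; apply/eqP; apply: imp.
by apply/allP => i; rewrite mem_iota => /andP[_ hi]; rewrite H.
Qed.

Lemma setof_bij : bijective (fun m : 'I_128 => setof m).
Proof.
apply: inj_card_bij.
  by move=> a b /setof_inj => /(_ (ltn_ord a) (ltn_ord b)) /val_inj.
by rewrite card_ord -cardsT -powersetT card_powerset cardsT card_ord.
Qed.

Lemma setof_surj (K : {set 'I_7}) : exists2 m, (m < 128)%N & K = setof m.
Proof.
have [g _ gK] := setof_bij.
by exists (g K) => //; rewrite gK.
Qed.

Lemma sum_sets (V : nmodType) (P : pred {set 'I_7}) (F : {set 'I_7} -> V) :
  \sum_(I | P I) F I = \sum_(0 <= m < 128 | P (setof m)) F (setof m).
Proof.
rewrite (reindex (fun m : 'I_128 => setof m)) /=; last exact: onW_bij setof_bij.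
by rewrite -(big_mkord (fun m => P (setof m)) (fun m => F (setof m))).
Qed.

Lemma chk_setD : all (fun k => all (fun m =>
   (dm k m < 128)%N && all (fun i => bit i (dm k m) == ~~ bit i m && bit i k) (iota 0 7))
   (iota 0 128)) (iota 0 128).
Proof. by vm_compute. Qed.

Lemma bits_set (P : nat -> bool) (m : nat) :
  (forall i, (i < 7)%N -> bit i m = P i) -> forall i : 'I_7, (i \in setof m) = P i.
Proof. by move=> H i; rewrite inE H. Qed.

Lemma setD_tr k m : (k < 128)%N -> (m < 128)%N ->
  setof k :\: setof m = setof (dm k m) /\ (dm k m < 128)%N.
Proof.
move=> hk hm.
move/allP: chk_setD => /(_ k); rewrite mem_iota hk => /(_ isT) /allP /(_ m).
rewrite mem_iota hm => /(_ isT) /andP[h1 /allP h2]; split=> //.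
apply/setP => i; rewrite !inE.
by have := h2 i; rewrite mem_iota ltn_ord => /(_ isT) /eqP ->.
Qed.

Lemma setC_tr k : (k < 128)%N -> ~: setof k = setof (cm k) /\ (cm k < 128)%N.
Proof.
move=> hk; have [<- h] := setD_tr (isT : (127 < 128)%N) hk; split=> //.
apply/setP => i; rewrite !inE.
have -> : bit i 127 by case: i => [[|[|[|[|[|[|[|//]]]]]]]].
by rewrite andbT.
Qed.


Lemma sumNat_ext n F G : (forall i, F i = G i) -> sumNat n F = sumNat n G.
Proof. by move=> H; rewrite /sumNat; elim: (iota 0 n) => //= x s ->; rewrite H. Qed.
Lemma sumN_ext n F G : (forall i, F i = G i) -> sumN n F = sumN n G.
Proof. by move=> H; rewrite /sumN; elim: (iota 0 n) => //= x s ->; rewrite H. Qed.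

Lemma subset_tr m k : (setof m \subset setof k) = subM m k.
Proof.
apply/subsetP/allP => [H i | H x].
  rewrite mem_iota /= add0n => hi; apply/implyP => b.
  by have := H (Ordinal hi); rewrite !inE; apply.
by rewrite !inE => b; have := H x; rewrite mem_iota /= ltn_ord b => /(_ isT).
Qed.

Lemma card_tr m : #|setof m| = cardM m.
Proof.
rewrite -sum1_card (eq_bigl (fun i : 'I_7 => bit i m)); last by move=> i; rewrite inE.
by rewrite -(big_mkord (fun i => bit i m) (fun _ => 1%N)) sumNatE.
Qed.

Lemma shsign_tr (R : realType) a b : shsign R (setof a) (setof b) = (shZ a b)%:~R.
Proof.
rewrite /shsign /shZ rmorphXn /= rmorphN1; congr (_ ^+ _).
rewrite cardsE -sum1_card big_mkcond /=.
transitivity (\sum_(i < 7) \sum_(j < 7)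
   (if [&& bit i a, bit j b & (j < i)%N] then 1 else 0))%N.
  by rewrite pair_bigA; apply: eq_bigr => -[i j] _; rewrite unfold_in /= !inE.
rewrite -(big_mkord xpredT (fun i => \sum_(j < 7)
   (if [&& bit i a, bit j b & (j < i)%N] then 1 else 0))%N) sumNatE.
apply: sumNat_ext => i /=.
by rewrite -(big_mkord xpredT (fun j =>
   (if [&& bit i a, bit j b & (j < i)%N] then 1 else 0))%N) sumNatE.
Qed.


Definition wedgeM (a b : nat -> int) k :=
  sumN 128 (fun m => if subM m k then shZ m (dm k m) * b (dm k m) * a m else 0).
Definition hodgeM (e : int) (a : nat -> int) q := e * shZ (cm q) q * a (cm q).
Definition form2M (c : nat -> nat -> int) m : int :=
  if cardM m == 2%N then sumN 7 (fun i => if bit i m then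
     sumN 7 (fun j => if bit j m && (i < j)%N then c i j else 0) else 0) else 0.
Definition form1M (c : nat -> int) m : int :=
  if cardM m == 1%N then sumN 7 (fun i => if bit i m then c i else 0) else 0.
Definition w0M m : int := ((m == 6) || (m == 48))%N%:Z.

Lemma inord7 k (h : (k < 7)%N) : (inord k : 'I_7) = Ordinal h.
Proof. by apply: val_inj; rewrite /= inordK. Qed.

Section Tr.
Variable R : realType.

Lemma sumI7 (P : nat -> bool) (G : nat -> int) :
  \sum_(i : 'I_7 | P i) (G i)%:~R = (sumN 7 (fun i => if P i then G i else 0))%:~R :> R.
Proof. by rewrite -(sumNE 7 P G) big_mkord rmorph_sum. Qed.

Lemma wedge_tr (a b : Defs.form R) aM bM :
  (forall m, (m < 128)%N -> a (setof m) = (aM m)%:~R) ->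
  (forall m, (m < 128)%N -> b (setof m) = (bM m)%:~R) ->
  forall k, (k < 128)%N -> wedge (V:=R^o) a b (setof k) = (wedgeM aM bM k)%:~R.
Proof.
move=> ha hb k hk; rewrite /wedge sum_sets big_mkcond /=.
rewrite (eq_big_nat _ _ (F2 := fun m => (if subM m k then
   shZ m (dm k m) * bM (dm k m) * aM m else 0)%:~R)); last first.
  move=> m /andP[_ hm]; rewrite subset_tr; case: ifP => _; last by rewrite rmorph0.
  have [-> hd] := setD_tr hk hm.
  by rewrite shsign_tr ha // hb // !rmorphM.
by rewrite -rmorph_sum sumNE.
Qed.

Lemma hodge_tr (a : Defs.form R) aM (e : int) :
  (forall m, (m < 128)%N -> a (setof m) = (aM m)%:~R) ->
  forall q, (q < 128)%N -> hodge (V:=R^o) (e%:~R) a (setof q) = (hodgeM e aM q)%:~R.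
Proof.
move=> ha q hq; rewrite /hodge; have [-> hc] := setC_tr hq.
by rewrite shsign_tr ha // /hodgeM !rmorphM.
Qed.

Lemma form2_tr (c : nat -> nat -> int) m :
  form2 (V:=R^o) (fun i j : 'I_7 => (c i j)%:~R) (setof m) = (form2M c m)%:~R.
Proof.
rewrite /form2 /form2M card_tr; case: ifP => _; last by rewrite rmorph0.
rewrite (eq_bigl (fun i : 'I_7 => bit i m)); last by move=> i; rewrite inE.
rewrite (eq_bigr (fun i : 'I_7 => (sumN 7 (fun j => if bit j m && (i < j)%N then c i j else 0))%:~R)).
  exact: (sumI7 (fun i => bit i m) (fun i => sumN 7 (fun j => if bit j m && (i < j)%N then c i j else 0))).
move=> i _; rewrite (eq_bigl (fun j : 'I_7 => bit j m && (i < j)%N)); last by move=> j; rewrite inE.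
exact: (sumI7 (fun j => bit j m && (i < j)%N) (c i)).
Qed.

Lemma form1_tr (c : nat -> int) m :
  form1 (V:=R^o) (fun i : 'I_7 => (c i)%:~R) (setof m) = (form1M c m)%:~R.
Proof.
rewrite /form1 /form1M card_tr; case: ifP => _; last by rewrite rmorph0.
rewrite (eq_bigl (fun i : 'I_7 => bit i m)); last by move=> i; rewrite inE.
exact: (sumI7 (fun i => bit i m) c).
Qed.

Lemma w0_tr k : (k < 128)%N -> w0 R (setof k) = (w0M k)%:~R.
Proof.
move=> hk.
have E1 : [set (inord 1 : 'I_7); inord 2] = setof 6.
  rewrite (@inord7 1 isT) (@inord7 2 isT).
  by apply/setP => -[i hi]; rewrite !inE; move: hi; case: i => [|[|[|[|[|[|[|i]]]]]]] hi.
have E2 : [set (inord 4 : 'I_7); inord 5] = setof 48.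
  rewrite (@inord7 4 isT) (@inord7 5 isT).
  by apply/setP => -[i hi]; rewrite !inE; move: hi; case: i => [|[|[|[|[|[|[|i]]]]]]] hi.
have Eq : forall n, (n < 128)%N -> (setof k == setof n) = (k == n).
  by move=> n hn; apply/eqP/eqP => [/setof_inj|->] //; apply.
by rewrite /w0 E1 E2 !Eq // /w0M; case: (_ || _).
Qed.

End Tr.


Definition ebN n x y : int := let: (p, q) := epair n in
  ((x == p.-1) && (y == q.-1))%:Z - ((x == q.-1) && (y == p.-1))%:Z.
Definition lieN m n x y : int :=
  sumN 5 (fun c => ebN m x c * ebN n c y) - sumN 5 (fun c => ebN n x c * ebN m c y).
Definition lc k m n : int := let: (p, q) := epair k in lieN m n p.-1 q.-1.
Definition ebc k n : int := let: (p, q) := epair k in ebN n p.-1 q.-1.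

Lemma sumNE' n (F : nat -> int) : \sum_(0 <= i < n) F i = sumN n F.
Proof. by rewrite unlock /sumN /index_iota subn0. Qed.

Lemma epair_le k : ((epair k).1 <= 5)%N && ((epair k).2 <= 5)%N.
Proof. by case: k => [|[|[|[|[|[|[|[|[|[|[|k]]]]]]]]]]]. Qed.

Lemma predlt p : (p <= 5)%N -> (p.-1 < 5)%N.
Proof. by case: p. Qed.

Section Mx.
Variable R : realType.

Lemma ebE n (i j : 'I_5) : ebasis R n i j = (ebN n i j)%:~R.
Proof.
rewrite /ebasis /ebN /Emx; have := epair_le n.
case: (epair n) => [p q] /= /andP[/predlt hp /predlt hq]; rewrite !mxE.
by rewrite -!val_eqE /= !inordK // rmorphB.
Qed.

Lemma ecoefE k (A : 'M[R]_5) (f : nat -> nat -> int) :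
  (forall i j : 'I_5, A i j = (f i j)%:~R) ->
  ecoef k A = (let: (p, q) := epair k in f p.-1 q.-1)%:~R.
Proof.
move=> H; rewrite /ecoef; have := epair_le k.
by case: (epair k) => [p q] /= /andP[/predlt hp /predlt hq]; rewrite H !inordK.
Qed.

Lemma ecoef_eb k n : ecoef k (ebasis R n) = (ebc k n)%:~R.
Proof. by rewrite (ecoefE k (ebE n)). Qed.

Lemma lieE m n (i j : 'I_5) : lie (ebasis R m) (ebasis R n) i j = (lieN m n i j)%:~R.
Proof.
rewrite /lie !mxE /lieN rmorphB /= -!sumNE' !big_mkord !rmorph_sum /=.
by congr (_ - _); apply: eq_bigr => c _; rewrite !ebE rmorphM.
Qed.

Lemma lc_eb k m n : ecoef k (lie (ebasis R m) (ebasis R n)) = (lc k m n)%:~R.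
Proof. by rewrite (ecoefE k (lieE m n)). Qed.

Lemma ecoefZ k c (A : 'M[R]_5) : ecoef k (c *: A) = c * ecoef k A.
Proof. by rewrite /ecoef; case: (epair k) => ? ?; rewrite mxE. Qed.

Lemma lieZ c d (A B : 'M[R]_5) : lie (c *: A) (d *: B) = (c * d) *: lie A B.
Proof. by rewrite /lie -!scalemxAl -!scalemxAr !scalerA scalerBr (mulrC d c). Qed.

End Mx.


Lemma chk_ebc : all (fun i => [&& ebc 8 i.+1 == 0, ebc 9 i.+1 == 0, ebc 10 i.+1 == 0
   & ebc 1 i.+1 == (i == 0)%N%:Z]) (iota 0 7).
Proof. by vm_compute. Qed.

Lemma chk_lc : all (fun i => all (fun j => all (fun k =>
   (lc k i.+1 j.+1 != 0) ==> ((i != 0)%N && (j != 0)%N)) [:: 1; 8; 9; 10]%N)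
   (iota 0 7)) (iota 0 7).
Proof. by vm_compute. Qed.

Lemma ebcX (i : 'I_7) : [&& ebc 8 i.+1 == 0, ebc 9 i.+1 == 0, ebc 10 i.+1 == 0
   & ebc 1 i.+1 == (i == 0 :> nat)%:Z].
Proof. by move/allP: chk_ebc; apply; rewrite mem_iota /=. Qed.

Lemma lcX (i j : 'I_7) k : k \in [:: 1; 8; 9; 10]%N ->
  lc k i.+1 j.+1 != 0 -> (i != 0 :> nat) && (j != 0 :> nat).
Proof.
move=> hk; have mi : forall l : 'I_7, (nat_of_ord l) \in iota 0 7 by move=> l; rewrite mem_iota ltn_ord.
move/allP: chk_lc => /(_ i (mi i)) /allP /(_ j (mi j)) /allP /(_ k hk) /implyP.
by [].
Qed.

Section Geo.
Variables (R : realType) (y1 y2 y3 : R).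
Hypotheses (hy2 : 0 < y2) (hy3 : y3 = y2) (hy1 : y1 = 4 * y2 ^+ 2).

Lemma sy1 : Num.sqrt y1 = 2 * y2.
Proof.
rewrite hy1 (_ : 4 * y2 ^+ 2 = (2 * y2) ^+ 2); last by ring.
by rewrite sqrtr_sqr ger0_norm // mulr_ge0 // ltW.
Qed.

Lemma syi (i : 'I_7) : (i != 0 :> nat) -> Num.sqrt (yof y1 y2 y3 i) = Num.sqrt y2.
Proof. by move=> /negbTE hi; rewrite /yof hi; case: ifP => // _; rewrite hy3. Qed.

Lemma fac (i j : 'I_7) k : k \in [:: 1; 8; 9; 10]%N ->
  ((Num.sqrt (yof y1 y2 y3 i))^-1 * (Num.sqrt (yof y1 y2 y3 j))^-1) * (lc k i.+1 j.+1)%:~R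
  = y2^-1 * (lc k i.+1 j.+1)%:~R.
Proof.
move=> hk; have [-> | nz] := eqVneq (lc k i.+1 j.+1) 0; first by rewrite mulr0z !mulr0.
have /andP[hi hj] := lcX hk nz.
by rewrite !syi // -invfM -expr2 sqr_sqrtr // ltW.
Qed.

Lemma alphaX (i : 'I_7) : alpha (X y1 y2 y3 i) = 0.
Proof.
have /and4P[/eqP h8 /eqP h9 /eqP h10 _] := ebcX i.
by rewrite /alpha /X !ecoefZ !ecoef_eb h8 h9 h10 !mulr0 !scale0r !addr0.
Qed.

Definition Mk k : 'M[R]_5 := (- y2^-1) *: ebasis R k.

Lemma curvX (i j : 'I_7) : curv (X y1 y2 y3 i) (X y1 y2 y3 j) =
  (lc 8 i.+1 j.+1)%:~R *: Mk 8 + (lc 9 i.+1 j.+1)%:~R *: Mk 9 + (lc 10 i.+1 j.+1)%:~R *: Mk 10.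
Proof.
have l00 : lie (0 : 'M[R]_5) 0 = 0 by rewrite /lie mul0mx subr0.
rewrite /curv !alphaX l00 /X lieZ /alpha !ecoefZ !lc_eb !fac // sub0r !opprD /Mk !scalerA.
by rewrite -!scaleNr !mulrN !(mulrC y2^-1).
Qed.

Lemma etaX (i : 'I_7) : etaf y1 (X y1 y2 y3 i) = ((i == 0 :> nat)%:Z)%:~R.
Proof.
have /and4P[_ _ _ /eqP h1] := ebcX i.
rewrite /etaf /X ecoefZ ecoef_eb h1.
case: eqP => [h0|]; last by rewrite !mulr0.
have -> : yof y1 y2 y3 i = y1 by rewrite /yof h0.
have hs : Num.sqrt y1 != 0 by rewrite sy1 mulf_neq0 // lt0r_neq0.
by rewrite mulr1 mulfV.
Qed.

Lemma omegaX (i j : 'I_7) : - (1 / 2) * etaf y1 (lie (X y1 y2 y3 i) (X y1 y2 y3 j))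
   = (- lc 1 i.+1 j.+1)%:~R.
Proof.
rewrite /etaf /X lieZ ecoefZ lc_eb fac // sy1 rmorphN /=.
have hy : y2 != 0 by rewrite lt0r_neq0.
by field.
Qed.

End Geo.


Definition etaM := form1M (fun i => (i == 0)%N%:Z).
Definition omegaM := form2M (fun i j => - lc 1 i.+1 j.+1).
Definition rM k := form2M (fun i j => lc k i.+1 j.+1).
Definition tabf (f : nat -> int) : nat -> int :=
  let t := map f (iota 0 128) in fun m => nth 0 t m.
Lemma tabfE f m : (m < 128)%N -> tabf f m = f m.
Proof. by move=> hm; rewrite /tabf (nth_map 0%N) ?size_iota // nth_iota. Qed.
Definition checkT (T : nat -> int) k (e : int) :=
  all (fun q => hodgeM e (wedgeM T omegaM) q == rM k q) (iota 0 128).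

Lemma chk8 : checkT (tabf (wedgeM (rM 8) etaM)) 8 1.
Proof. by vm_compute. Qed.
Lemma chk9 : checkT (tabf (wedgeM (rM 9) etaM)) 9 1.
Proof. by vm_compute. Qed.
Lemma chk10 : checkT (tabf (wedgeM (rM 10) etaM)) 10 1.
Proof. by vm_compute. Qed.
Lemma chkH : hodgeM (-1) (wedgeM (tabf (wedgeM etaM omegaM)) w0M) 6 = -1.
Proof. by vm_compute. Qed.



Section Main.
Variables (R : realType) (y1 y2 y3 : R).
Hypotheses (hy2 : 0 < y2) (hy3 : y3 = y2) (hy1 : y1 = 4 * y2 ^+ 2).

Lemma form1_ext (V : lmodType R) (f g : 'I_7 -> V) I : f =1 g -> form1 f I = form1 g I.
Proof. by move=> H; rewrite /form1; case: ifP => // _; apply: eq_bigr. Qed.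
Lemma form2_ext (V : lmodType R) (f g : 'I_7 -> 'I_7 -> V) I :
  (forall i j, f i j = g i j) -> form2 f I = form2 g I.
Proof.
by move=> H; rewrite /form2; case: ifP => // _; apply: eq_bigr => i _; apply: eq_bigr.
Qed.

Lemma eta_tr m : eta_form y1 y2 y3 (setof m) = (etaM m)%:~R.
Proof.
rewrite /eta_form (form1_ext _ (g := fun i : 'I_7 => ((i == 0 :> nat)%:Z)%:~R)).
  exact: (form1_tr R (fun i => (i == 0)%N%:Z)).
by move=> i; rewrite etaX.
Qed.

Lemma omega_tr m : omega y1 y2 y3 (setof m) = (omegaM m)%:~R.
Proof.
rewrite /omega (form2_ext _ (g := fun i j : 'I_7 => (- lc 1 i.+1 j.+1)%:~R)).
  exact: (form2_tr R (fun i j => - lc 1 i.+1 j.+1) m).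
by move=> i j; rewrite omegaX.
Qed.

Definition rk k : Defs.form R := form2 (V := R^o) (fun i j : 'I_7 => (lc k i.+1 j.+1)%:~R).

Lemma rk_tr k m : rk k (setof m) = (rM k m)%:~R.
Proof. exact: (form2_tr R (fun i j => lc k i.+1 j.+1) m). Qed.

Lemma FalE I : Fal y1 y2 y3 I =
  rk 8 I *: Mk y2 8 + rk 9 I *: Mk y2 9 + rk 10 I *: Mk y2 10.
Proof.
rewrite /Fal /rk /form2; case: ifP => _; last by rewrite !scale0r !addr0.
rewrite (eq_bigr (fun i : 'I_7 => \sum_(j in I | (i < j)%N)
  ((lc 8 i.+1 j.+1)%:~R *: Mk y2 8 + (lc 9 i.+1 j.+1)%:~R *: Mk y2 9
   + (lc 10 i.+1 j.+1)%:~R *: Mk y2 10))); last first.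
  by move=> i _; apply: eq_bigr => j _; rewrite curvX.
rewrite !scaler_suml -!big_split /=; apply: eq_bigr => i _.
by rewrite !scaler_suml -!big_split.
Qed.

Lemma wedge3 (a : Defs.form 'M[R]_5) (b : Defs.form R) (r1 r2 r3 : Defs.form R) (M1 M2 M3 : 'M[R]_5) :
  (forall I, a I = r1 I *: M1 + r2 I *: M2 + r3 I *: M3) ->
  forall K, wedge a b K = wedge (V:=R^o) r1 b K *: M1 + wedge (V:=R^o) r2 b K *: M2
     + wedge (V:=R^o) r3 b K *: M3.
Proof.
move=> H K; rewrite /wedge !scaler_suml -!big_split /=; apply: eq_bigr => I _.
by rewrite H !scalerDr !scalerA.
Qed.

Lemma hodge3 (eps : R) (a : Defs.form 'M[R]_5) (r1 r2 r3 : Defs.form R) (M1 M2 M3 : 'M[R]_5) :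
  (forall I, a I = r1 I *: M1 + r2 I *: M2 + r3 I *: M3) ->
  forall K, hodge eps a K = hodge (V:=R^o) eps r1 K *: M1 + hodge (V:=R^o) eps r2 K *: M2
     + hodge (V:=R^o) eps r3 K *: M3.
Proof. by move=> H K; rewrite /hodge H !scalerDr !scalerA. Qed.

Lemma comp k m : (m < 128)%N -> checkT (tabf (wedgeM (rM k) etaM)) k 1 ->
  hodge (V:=R^o) 1 (wedge (V:=R^o) (wedge (V:=R^o) (rk k) (eta_form y1 y2 y3))
     (omega y1 y2 y3)) (setof m) = rk k (setof m).
Proof.
move=> hm chk.
have h1 : forall m, (m < 128)%N -> wedge (V:=R^o) (rk k) (eta_form y1 y2 y3) (setof m)
   = (tabf (wedgeM (rM k) etaM) m)%:~R.
  move=> n hn; rewrite tabfE //; apply: wedge_tr => // p _; [exact: rk_tr | exact: eta_tr].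
have h2 := wedge_tr h1 (fun p _ => omega_tr p).
have -> : (1 : R) = (1 : int)%:~R by [].
rewrite (hodge_tr 1 h2 hm) rk_tr; congr (_%:~R); apply/eqP.
by move/allP: chk => /(_ m); rewrite mem_iota hm; apply.
Qed.

End Main.


Unset Implicit Arguments.
Theorem corollary4p7 (R : realType) (y1 y2 y3 eps : R) :
  0 < y2 -> y3 = y2 -> y1 = 4 * y2 ^+ 2 ->
  (eps = 1 \/ eps = -1) ->
  (* orientation: ast(eta /\ omega /\ w) = w for w = X^23 + X^56 *)
  hodge (V := R^o) eps
    (wedge (V := R^o) (wedge (V := R^o) (eta_form y1 y2 y3) (omega y1 y2 y3)) (w0 R))
    = w0 R ->
  hodge eps (wedge (wedge (Fal y1 y2 y3) (eta_form y1 y2 y3)) (omega y1 y2 y3))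
    = Fal y1 y2 y3.
Proof.
move=> hy2 hy3 hy1 [] -> hyp; last first.
  move: hyp => /(congr1 (fun f => f (setof 6))).
  have h1 : forall m, (m < 128)%N -> wedge (V:=R^o) (eta_form y1 y2 y3) (omega y1 y2 y3) (setof m)
     = (tabf (wedgeM etaM omegaM) m)%:~R.
    move=> n hn; rewrite tabfE //; apply: wedge_tr => // p _; [exact: eta_tr | exact: omega_tr].
  have h2 := wedge_tr h1 (fun p hp => w0_tr R hp).
  have -> : (-1 : R) = (-1 : int)%:~R by rewrite rmorphN1.
  rewrite (hodge_tr (-1) h2 (isT : (6 < 128)%N)) chkH w0_tr // rmorphN1.
  move=> h; exfalso; have h0 : (-1 : R) = 1 := h; lra.
apply: functional_extensionality => K.
have [m hm ->] := setof_surj K.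
have W1 := wedge3 (eta_form y1 y2 y3) (@FalE R y1 y2 y3 hy2 hy3).
have W2 := wedge3 (omega y1 y2 y3) W1.
rewrite (hodge3 1 W2) (@FalE R y1 y2 y3 hy2 hy3).
rewrite (@comp R y1 y2 y3 hy2 hy3 hy1 8 m hm chk8).
rewrite (@comp R y1 y2 y3 hy2 hy3 hy1 9 m hm chk9).
by rewrite (@comp R y1 y2 y3 hy2 hy3 hy1 10 m hm chk10).
Qed.
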